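(* Let $q\in\mathbb{R}[x]$ be a positive definite polynomial of degree two. (a) For every psd polynomial $f\in\mathbb{R}[x]$ there exist $\xi,\eta\in\mathbb{R}[x]$ with $f=\eta^2+q\xi^2$. (b) If $f\neq0$ in (a) has $\deg(f)=2d$, then the number of pairs $(\xi,\eta)\in\mathbb{R}[x]^2$ with $f=\eta^2+q\xi^2$ is at most $2^{d+1}$, with equality if and only if $q\nmid f$ and $f$ is square-free.
   Context: A real polynomial is psd (positive semidefinite) if it takes only nonnegative values on $\mathbb{R}$, and positive definite if it takes only positive values on $\mathbb{R}$. *)

(* Defs.v *)
From mathcomp Require Import all_boot all_order all_algebra.
From mathcomp Require Import reals.
Set Implicit Arguments. Unset Strict Implicit. Unset Printing Implicit Defensive.
Import Order.TTheory GRing.Theory Num.Theory.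
Local Open Scope ring_scope.

Definition psd_poly (R : realType) (f : {poly R}) : Prop :=
  forall x : R, 0 <= f.[x].

Definition pd_poly (R : realType) (f : {poly R}) : Prop :=
  forall x : R, 0 < f.[x].

Definition squarefree_poly (R : realType) (f : {poly R}) : Prop :=
  forall g : {poly R}, (1 < size g)%N -> ~ (g ^+ 2 %| f).

(* Main.v *)
Require Import Defs.
From mathcomp Require Import all_boot all_order all_algebra.
From mathcomp Require Import reals.
From mathcomp Require Import ring lra zify.
From mathcomp.real_closed Require Import complex polyrcf.
From Stdlib Require Import Classical.
Import Order.TTheory GRing.Theory Num.Theory.
Set Implicit Arguments. Unset Strict Implicit. Unset Printing Implicit Defensive.
Local Open Scope ring_scope.


Definition nrm (R : realType) (q : {poly R}) (u : {poly R} * {poly R}) : {poly R} :=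
  u.2 ^+ 2 + q * u.1 ^+ 2.

Lemma poly3E (R : realType) (p : {poly R}) : (size p <= 3)%N ->
  p = (p`_2)%:P * 'X^2 + (p`_1)%:P * 'X + (p`_0)%:P.
Proof.
move=> sp; apply/polyP => i; rewrite !coefE.
case: i => [|[|[|i]]] /=; rewrite ?mulr0 ?mulr1 ?addr0 ?add0r //.
by move/leq_sizeP: sp => ->.
Qed.

Lemma horner3 (R : realType) (p : {poly R}) (x : R) : (size p <= 3)%N ->
  p.[x] = p`_2 * x ^+ 2 + p`_1 * x + p`_0.
Proof. by move=> sp; rewrite {1}(poly3E sp) !hornerE. Qed.

Lemma size_add_lc (R : realType) (A B : {poly R}) :
  0 <= lead_coef A -> 0 <= lead_coef B ->
  (size A <= size (A + B)%R)%N /\ (size B <= size (A + B)%R)%N.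
Proof.
move=> hA hB.
have [ltAB|leBA] := ltnP (size A) (size B).
  by rewrite addrC size_polyDl // (ltnW ltAB).
have [ltBA|leAB] := ltnP (size B) (size A).
  by rewrite size_polyDl // leqnn (ltnW ltBA).
have eqAB : size A = size B by apply/eqP; rewrite eqn_leq leAB leBA.
have [->|Bn0] := eqVneq B 0; first by rewrite addr0 size_poly0 leqnn.
have lB : 0 < lead_coef B by rewrite lt_def lead_coef_eq0 Bn0.
have hc : (A + B)`_(size B).-1 != 0.
  rewrite coefD -{1}eqAB; apply/lt0r_neq0.
  by rewrite -/(lead_coef A) -/(lead_coef B); apply: ltr_wpDl.
have : ((size B).-1 < size (A + B)%R)%N.
  rewrite ltnNge; apply/negP => /leq_sizeP/(_ _ (leqnn _)) h.
  by rewrite h eqxx in hc.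
have : (0 < size B)%N by rewrite size_poly_gt0.
by rewrite eqAB; case: (size B) => // n _ /= h; split.
Qed.

Lemma lcq_pos (R : realType) (q : {poly R}) : pd_poly q -> size q = 3%N ->
  0 < lead_coef q.
Proof.
move=> hq sq.
have qn0 : lead_coef q != 0 by rewrite lead_coef_eq0 -size_poly_eq0 sq.
rewrite lt_def qn0 /=; rewrite leNgt; apply/negP => hl.
have : 0 < lead_coef (- q) by rewrite lead_coefN oppr_gt0.
move=> /poly_pinfty_gt_lc [n hn].
have := hn n (lexx n); rewrite lead_coefN hornerN lerN2 => h.
have := hq n; lra.
Qed.

Lemma nrm_size (R : realType) (q : {poly R}) (u : {poly R} * {poly R}) :
  0 < lead_coef q ->
  (size (u.2 ^+ 2)%R <= size (nrm q u))%N /\ (size (q * u.1 ^+ 2)%R <= size (nrm q u))%N.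
Proof.
move=> lq; apply: size_add_lc.
  by rewrite lead_coef_exp sqr_ge0.
by rewrite lead_coefM lead_coef_exp mulr_ge0 ?sqr_ge0 // ltW.
Qed.

Lemma nrm_eq0 (R : realType) (q : {poly R}) (u : {poly R} * {poly R}) :
  0 < lead_coef q -> nrm q u = 0 -> u.1 = 0 /\ u.2 = 0.
Proof.
move=> lq h; have [h1 h2] := nrm_size u lq; rewrite h size_poly0 !leqn0 in h1 h2.
have qn0 : q != 0 by rewrite -lead_coef_eq0 gt_eqF.
move: h1 h2; rewrite !size_poly_eq0 !sqrf_eq0 mulf_eq0 (negPf qn0) /= sqrf_eq0.
by move=> /eqP -> /eqP ->.
Qed.

Lemma psd_div (R : realType) (p g : {poly R}) : pd_poly p -> psd_poly (p * g) ->
  psd_poly g.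
Proof.
by move=> hp hf x; have := hf x; rewrite hornerM pmulr_rge0.
Qed.

Lemma irr_coprime (R : realType) (p a : {poly R}) : irreducible_poly p ->
  ~~ (p %| a) -> coprimep p a.
Proof.
move=> ip npa; have [h|h] := irredp_XsubCP ip (dvdp_gcdl p a).
  by rewrite -gcdp_eqp1.
by move: npa; rewrite -(eqp_dvdl _ h) dvdp_gcdr.
Qed.

Lemma irr_prime (R : realType) (p a b : {poly R}) : irreducible_poly p ->
  p %| a * b -> (p %| a) || (p %| b).
Proof.
move=> ip hab; case: (boolP (p %| a)) => //= /(irr_coprime ip) c.
by rewrite -(Gauss_dvdpr _ c).
Qed.

Lemma irr_sq (R : realType) (p a : {poly R}) : irreducible_poly p ->
  p %| a ^+ 2 -> p %| a.
Proof. by move=> ip; rewrite expr2 => /(irr_prime ip) /orP [] . Qed.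

Lemma pd_irr (R : realType) (p : {poly R}) : pd_poly p -> size p = 3%N ->
  irreducible_poly p.
Proof.
move=> hp sp; apply: cubic_irreducible; first by rewrite sp.
by move=> x; rewrite /root; apply/lt0r_neq0.
Qed.


Lemma disc_neg (R : realType) (p : {poly R}) : pd_poly p -> size p = 3%N ->
  p`_1 ^+ 2 < 4%:R * p`_2 * p`_0.
Proof.
move=> hp sp; have l := lcq_pos hp sp; rewrite lead_coefE sp /= in l.
have h := hp (- p`_1 / (2%:R * p`_2)); rewrite horner3 ?sp // in h.
have e : 4%:R * p`_2 * (p`_2 * (- p`_1 / (2%:R * p`_2)) ^+ 2 +
           p`_1 * (- p`_1 / (2%:R * p`_2)) + p`_0) = 4%:R * p`_2 * p`_0 - p`_1 ^+ 2.
  by field; rewrite gt_eqF.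
have : 0 < 4%:R * p`_2 * (p`_2 * (- p`_1 / (2%:R * p`_2)) ^+ 2 +
           p`_1 * (- p`_1 / (2%:R * p`_2)) + p`_0).
  by rewrite mulr_gt0 // mulr_gt0.
rewrite e; lra.
Qed.

Lemma qr_sub (R : realType) (q p : {poly R}) (t : R) :
  (size p <= 3)%N -> (size q <= 3)%N -> 0 < t -> 0 < p`_2 - t * q`_2 ->
  (p`_1 - t * q`_1) ^+ 2 = 4%:R * (p`_2 - t * q`_2) * (p`_0 - t * q`_0) ->
  exists A B : {poly R}, p = A ^+ 2 + q * B ^+ 2 /\ A != 0 /\ B != 0.
Proof.
move=> sp sq t0 al0 hD.
have Ep := poly3E sp; have Eq := poly3E sq.
move: hD al0 Ep Eq.
set p2 := p`_2; set p1 := p`_1; set p0 := p`_0.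
set q2 := q`_2; set q1 := q`_1; set q0 := q`_0.
move=> hD al0 Ep Eq.
set al := p2 - t * q2; set be := p1 - t * q1.
set s := Num.sqrt al; set r := Num.sqrt t.
have s0 : 0 < s by rewrite sqrtr_gt0.
have r0 : 0 < r by rewrite sqrtr_gt0.
have ss : s ^+ 2 = al by rewrite sqr_sqrtr // ltW.
have rr : r ^+ 2 = t by rewrite sqr_sqrtr // ltW.
exists (s%:P * 'X + (be / (2%:R * s))%:P), r%:P.
split; last split.
- have e2 : p2 = s ^+ 2 + q2 * r ^+ 2 by rewrite ss rr /al; ring.
  have e1 : p1 = s * (be / (2%:R * s)) + s * (be / (2%:R * s)) + q1 * r ^+ 2.
    by rewrite rr /be; field; rewrite gt_eqF.
  have e0 : p0 = (be / (2%:R * s)) ^+ 2 + q0 * r ^+ 2.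
    rewrite rr; have -> : (be / (2%:R * s)) ^+ 2 = be ^+ 2 / (4%:R * s ^+ 2).
      by field; rewrite gt_eqF.
    by rewrite ss hD /al; field; rewrite gt_eqF.
  rewrite {1}Ep Eq e2 e1 e0.
  rewrite !(rmorphD, rmorphM, rmorphXn) /=.
  ring.
- apply/eqP => /(congr1 (fun P : {poly R} => P`_1)).
  by rewrite !coefE /= => /eqP; rewrite mulr1 addr0 gt_eqF.
- by rewrite polyC_eq0 gt_eqF.
Qed.

Lemma qr (R : realType) (q p : {poly R}) : pd_poly q -> size q = 3%N ->
  pd_poly p -> size p = 3%N ->
  (q %| p) \/ exists A B : {poly R}, p = A ^+ 2 + q * B ^+ 2 /\ A != 0 /\ B != 0.
Proof.
move=> hq sq hp sp.
have lq := lcq_pos hq sq; rewrite lead_coefE sq /= in lq.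
have lp := lcq_pos hp sp; rewrite lead_coefE sp /= in lp.
have dq := disc_neg hq sq; have dp := disc_neg hp sp.
have sp3 : (size p <= 3)%N by rewrite sp.
have sq3 : (size q <= 3)%N by rewrite sq.
have Ep := poly3E sp3; have Eq := poly3E sq3.
have QS := @qr_sub R q p.
move: lq lp dq dp Ep Eq QS.
set p2 := p`_2; set p1 := p`_1; set p0 := p`_0.
set q2 := q`_2; set q1 := q`_1; set q0 := q`_0.
move=> lq lp dq dp Ep Eq QS.
set t1 := p2 / q2.
have t10 : 0 < t1 by rewrite divr_gt0.
have E2 : p2 = t1 * q2 by rewrite /t1; field; rewrite gt_eqF.
clearbody t1.
have ivt := @poly_ivt R.
case: (eqVneq p1 (t1 * q1)) => [hz|hne]; last first.
  pose Dp := (p1%:P - q1 *: 'X) ^+ 2 - 4%:R%:P * ((p2%:P - q2 *: 'X) * (p0%:P - q0 *: 'X)).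
  have DE : forall t, Dp.[t] = (p1 - t * q1) ^+ 2 - 4%:R * (p2 - t * q2) * (p0 - t * q0).
    by move=> t; rewrite /Dp !(hornerD, hornerN, hornerM, hornerZ, hornerX, hornerC, horner_exp); ring.
  have D0 : Dp.[0] < 0 by rewrite DE; lra.
  have D1 : 0 < Dp.[t1].
    rewrite DE E2 subrr mulr0 mul0r subr0 lt_def sqr_ge0 andbT sqrf_eq0 subr_eq0.
    exact: hne.
  have hh : Dp.[0] <= 0 <= Dp.[t1] by rewrite !ltW.
  have [t /andP [t0 tt1] rt] := ivt Dp 0 t1 (ltW t10) hh.
  move: rt; rewrite /root => /eqP rt.
  have tn0 : t != 0 by apply/eqP => e; rewrite e in rt; rewrite rt ltxx in D0.
  have tnt1 : t != t1 by apply/eqP => e; rewrite e in rt; rewrite rt ltxx in D1.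
  have tpos : 0 < t by rewrite lt_def tn0.
  have tlt : t < t1 by rewrite lt_def eq_sym tnt1.
  right; apply: (QS t) => //.
  - by rewrite E2 -mulrBl mulr_gt0 // subr_gt0.
  - by move: rt; rewrite DE => /eqP; rewrite subr_eq0 => /eqP.
have [kp|kn|kz] := ltgtP (p0 - t1 * q0) 0; last first.
- left; apply/dvdpP; exists t1%:P.
  rewrite {1}Ep Eq E2 hz.
  have -> : p0 = t1 * q0 by apply/eqP; rewrite -subr_eq0 kz.
  rewrite !(rmorphD, rmorphM, rmorphXn) /=; ring.
- right; set sk := Num.sqrt (p0 - t1 * q0); set st := Num.sqrt t1.
  have sk2 : sk ^+ 2 = p0 - t1 * q0 by rewrite sqr_sqrtr // ltW.
  have st2 : st ^+ 2 = t1 by rewrite sqr_sqrtr // ltW.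
  exists sk%:P, st%:P.
  split; last split; try by rewrite polyC_eq0 gt_eqF // sqrtr_gt0.
  have e2 : p2 = q2 * st ^+ 2 by rewrite st2 E2 mulrC.
  have e1 : p1 = q1 * st ^+ 2 by rewrite st2 hz mulrC.
  have e0 : p0 = sk ^+ 2 + q0 * st ^+ 2 by rewrite sk2 st2; ring.
  rewrite {1}Ep Eq e2 e1 e0.
  rewrite !(rmorphD, rmorphM, rmorphXn) /=; ring.
- pose Lp := (t1%:P - 'X) * (q1 ^+ 2)%:P - 4%:R%:P * (q2%:P * (p0%:P - q0 *: 'X)).
  have LE : forall t, Lp.[t] = (t1 - t) * q1 ^+ 2 - 4%:R * (q2 * (p0 - t * q0)).
    by move=> t; rewrite /Lp !(hornerD, hornerN, hornerM, hornerZ, hornerX, hornerC, horner_exp); ring.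
  have L0 : Lp.[0] < 0.
    have : t1 * Lp.[0] = p1 ^+ 2 - 4%:R * p2 * p0 by rewrite LE hz E2; ring.
    move=> e; have : t1 * Lp.[0] < 0 by rewrite e; lra.
    by rewrite pmulr_rlt0.
  have L1 : 0 < Lp.[t1].
    by rewrite LE subrr mul0r sub0r oppr_gt0 pmulr_rlt0 ?ltr0n // pmulr_rlt0.
  have hh : Lp.[0] <= 0 <= Lp.[t1] by rewrite !ltW.
  have [t /andP [t0 tt1] rt] := ivt Lp 0 t1 (ltW t10) hh.
  move: rt; rewrite /root => /eqP rt.
  have tn0 : t != 0 by apply/eqP => e; rewrite e in rt; rewrite rt ltxx in L0.
  have tnt1 : t != t1 by apply/eqP => e; rewrite e in rt; rewrite rt ltxx in L1.
  have tpos : 0 < t by rewrite lt_def tn0.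
  have tlt : t < t1 by rewrite lt_def eq_sym tnt1.
  right; apply: (QS t) => //.
  - by rewrite E2 -mulrBl mulr_gt0 // subr_gt0.
  - have : (p1 - t * q1) ^+ 2 - 4%:R * (p2 - t * q2) * (p0 - t * q0) = (t1 - t) * Lp.[t].
      by rewrite LE hz E2; ring.
    by rewrite rt mulr0 => /eqP; rewrite subr_eq0 => /eqP.
Qed.

Local Open Scope complex_scope.



Lemma fta2 (R : realType) (f : {poly R}) : (1 < size f)%N ->
  (forall x, ~~ root f x) ->
  exists a b : R, b != 0 /\ (('X - a%:P) ^+ 2 + (b ^+ 2)%:P %| f).
Proof.
move=> sf nr.
pose fC := map_poly (real_complex R) f.
have sfC : size fC = size f by rewrite size_map_poly.
have [z rz] : exists z, root fC z.
  by apply/closed_rootP; rewrite sfC; case: (size f) sf => [|[|n]].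
case: z rz => a b rz; exists a, b.
have bn0 : b != 0.
  apply/negP => /eqP b0; move: rz; rewrite b0 => rz.
  by have := nr a; rewrite -(fmorph_root (real_complex R)) /= rz.
split => //.
set z := (a +i* b)%C.
have zE : z = a%:C + 'i%C * b%:C by rewrite /z /=; simpc.
pose zc := z^*%C.
have zcE : zc = a%:C - 'i%C * b%:C by rewrite /zc /z /=; simpc.
have rzc : root fC zc.
  have : map_poly conjc fC = fC.
    rewrite /fC -map_poly_comp; apply: eq_map_poly => x /=; exact: conjc_real.
  by move=> e; rewrite /zc -complex_root_conj e.
have cop : coprimep ('X - z%:P) ('X - zc%:P).
  apply: coprimep_XsubC2; rewrite zcE zE.
  have -> : a%:C - 'i%C * b%:C - (a%:C + 'i%C * b%:C) = - (2%:R * 'i%C * b%:C) :> R[i] by ring.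
  rewrite oppr_eq0 !mulf_neq0 //; last by rewrite (inj_eq (@complexI R)).
  - by rewrite pnatr_eq0.
  - by apply/eqP => /(congr1 (@complex.Im R)) /= /eqP; rewrite oner_eq0.
rewrite -(dvdp_map (real_complex R)).
have -> : map_poly (real_complex R) (('X - a%:P) ^+ 2 + (b ^+ 2)%:P) =
  ('X - z%:P) * ('X - zc%:P).
  rewrite rmorphD rmorphXn rmorphB /= map_polyX !map_polyC /= rmorphXn /=.
  rewrite zcE zE !(polyCD, polyCB, polyCN, polyCM).
  have ip : ('i%C : R[i])%:P * ('i%C)%:P = -1.
    by rewrite -polyCM -expr2 sqr_i polyCN polyC1.
  have -> : (b%:C)%:P * (b%:C)%:P = - (('i%C : R[i])%:P * ('i%C)%:P) * ((b%:C)%:P * (b%:C)%:P).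
    by rewrite ip opprK mul1r.
  ring.
rewrite Gauss_dvdp // -!root_factor_theorem; apply/andP; split => //.
Qed.

Local Close Scope complex_scope.


Lemma cont_sign (R : realType) (g : {poly R}) (r : R) : g.[r] != 0 ->
  exists2 d : R, 0 < d & forall y, `|y - r| < d -> 0 < g.[y] * g.[r].
Proof.
move=> hn; have e0 : 0 < `|g.[r]| by rewrite normr_gt0.
have [d d0 hd] := poly_cont r g e0.
exists d => // y hy; have := hd y hy.
have [c0|c0|c0] := ltgtP g.[r] 0; last by rewrite c0 eqxx in hn.
- rewrite (ltr0_norm c0) ltr_norml => /andP [h1 h2].
  have : g.[y] < 0 by lra.
  by move=> h; rewrite -mulrNN mulr_gt0 // oppr_gt0.
- rewrite (gtr0_norm c0) ltr_norml => /andP [h1 h2].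
  have : 0 < g.[y] by lra.
  by move=> h; rewrite mulr_gt0.
Qed.

Lemma root_sq (R : realType) (f : {poly R}) (r : R) : psd_poly f -> root f r ->
  exists g, f = ('X - r%:P) ^+ 2 * g /\ psd_poly g.
Proof.
move=> hf /factor_theorem [g1 e1].
have g1r : g1.[r] = 0.
  case: (eqVneq g1.[r] 0) => // hn; exfalso.
  have [d d0 hd] := cont_sign hn.
  have h1 : 0 < g1.[r + d / 2%:R] * g1.[r].
    by apply: hd; rewrite addrC addKr ger0_norm ?divr_ge0 ?ltW //; lra.
  have h2 : 0 < g1.[r - d / 2%:R] * g1.[r].
    by apply: hd; rewrite addrC addKr normrN ger0_norm ?divr_ge0 ?ltW //; lra.
  have f1 : 0 <= g1.[r + d / 2%:R] * (d / 2%:R).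
    have := hf (r + d / 2%:R); rewrite e1 hornerM hornerXsubC.
    by have -> : r + d / 2%:R - r = d / 2%:R by ring.
  have f2 : 0 <= g1.[r - d / 2%:R] * (- (d / 2%:R)).
    have := hf (r - d / 2%:R); rewrite e1 hornerM hornerXsubC.
    by have -> : r - d / 2%:R - r = - (d / 2%:R) by ring.
  have dp : 0 < d / 2%:R by lra.
  have a1 : 0 <= g1.[r + d / 2%:R] by rewrite -(pmulr_lge0 _ dp).
  have a2 : g1.[r - d / 2%:R] <= 0.
    by rewrite -oppr_ge0 -(pmulr_lge0 _ dp) mulNr -mulrN.
  have b1 : 0 < g1.[r + d / 2%:R].
    by rewrite lt_def a1 andbT; apply: contraTneq h1 => ->; rewrite mul0r ltxx.
  have b2 : g1.[r - d / 2%:R] < 0.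
    by rewrite lt_neqAle a2 andbT; apply: contraTneq h2 => ->; rewrite mul0r ltxx.
  move: h1 h2; rewrite (pmulr_rgt0 _ b1) (nmulr_rgt0 _ b2) => c1 c2.
  by move: (lt_trans c2 c1); rewrite ltxx.
move/eqP: g1r; rewrite -/(root g1 r) => /factor_theorem [g e2].
exists g; split; first by rewrite e1 e2; ring.
have key : forall x, x != r -> 0 <= g.[x].
  move=> x xr; have := hf x; rewrite e1 e2 !hornerM hornerXsubC -mulrA -expr2.
  by rewrite pmulr_lge0 // exprn_even_gt0 //= subr_eq0.
move=> x; case: (eqVneq x r) => [->|]; last exact: key.
rewrite leNgt; apply/negP => gn.
have [d d0 hd] := cont_sign (ltr0_neq0 gn).
have h1 : 0 < g.[r + d / 2%:R] * g.[r].
  by apply: hd; rewrite addrC addKr ger0_norm ?divr_ge0 ?ltW //; lra.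
have : 0 <= g.[r + d / 2%:R].
  apply: key; apply/eqP => e.
  have : d / 2%:R = 0 by rewrite -[LHS](addKr r) e addNr.
  lra.
rewrite le_eqVlt => /orP [/eqP e|c1]; first by rewrite -e mul0r ltxx in h1.
by move: h1; rewrite (pmulr_rgt0 _ c1) => c2; move: (lt_trans gn c2); rewrite ltxx.
Qed.


Lemma size_sq_le (R : realType) (A : {poly R}) (n : nat) :
  (size (A ^+ 2) <= n.*2.+1)%N -> (size A <= n.+1)%N.
Proof.
have [->|An0] := eqVneq A 0; first by rewrite size_poly0.
have := size_exp A 2.
have : (0 < size (A ^+ 2))%N by rewrite size_poly_gt0 expf_neq0.
have : (0 < size A)%N by rewrite size_poly_gt0.
move: (size A) (size (A ^+ 2)) => a b ha hb e h.
rewrite -addnn in h. lia.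
Qed.

Definition pmul (R : realType) (q A B : {poly R}) (u : {poly R} * {poly R}) :=
  (u.1 * A + u.2 * B, u.2 * A - q * u.1 * B).

Lemma nrm_pmul (R : realType) (q A B : {poly R}) u :
  nrm q (pmul q A B u) = nrm q u * (A ^+ 2 + q * B ^+ 2).
Proof. by rewrite /nrm /pmul /=; ring. Qed.

Lemma classify (R : realType) (q f : {poly R}) : pd_poly q -> size q = 3%N ->
  psd_poly f -> (1 < size f)%N ->
  (exists r g, f = ('X - r%:P) ^+ 2 * g /\ psd_poly g) \/
  (exists g, f = q * g /\ psd_poly g) \/
  (~~ (q %| f) /\ exists p A B g, [/\ f = p * g, psd_poly g,
      p = A ^+ 2 + q * B ^+ 2, pd_poly p &
      [/\ size p = 3%N, irreducible_poly p, coprimep p A, coprimep p B & coprimep p q]]).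
Proof.
move=> hq sq hf sf.
case: (classic (exists r, root f r)) => [[r rr]|nor].
  by left; exists r; apply: root_sq.
right; case: (boolP (q %| f)) => qf.
  left; exists (f %/ q); split; first by rewrite mulrC divpK.
  by apply: (psd_div hq); rewrite mulrC divpK.
right; split => //.
have nr : forall x, ~~ root f x by move=> x; apply/negP => rx; apply: nor; exists x.
have [a [b [bn0 dv]]] := fta2 sf nr.
move: dv; set p := ('X - a%:P) ^+ 2 + (b ^+ 2)%:P => dv.
have hp : pd_poly p.
  move=> x; rewrite /p !hornerE.
  have : 0 < b ^+ 2 by rewrite lt_def sqr_ge0 andbT sqrf_eq0.
  have := sqr_ge0 (x - a); lra.
have sp : size p = 3%N.
  rewrite /p size_polyDl size_exp_XsubC // size_polyC.
  by case: (_ != 0).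
have ip := pd_irr hp sp.
have lq := lcq_pos hq sq.
have [qp|[A [B [pE [An0 Bn0]]]]] := qr hq sq hp sp.
  by move: qf; rewrite (dvdp_trans qp dv).
exists p, A, B, (f %/ p); split => //.
- by rewrite mulrC divpK.
- by apply: (psd_div hp); rewrite mulrC divpK.
have [sA sB] := nrm_size (B, A) lq; rewrite /nrm /= -pE sp in sA sB.
split => //.
- apply: irr_coprime => //; apply/negP => pA.
  have := dvdp_leq An0 pA; rewrite sp.
  by have := @size_sq_le R A 1 sA; move=> h1; rewrite ltnNge h1.
- apply: irr_coprime => //; apply/negP => pB.
  have := dvdp_leq Bn0 pB; rewrite sp.
  have qBn0 : q * B ^+ 2 != 0.
    by rewrite mulf_neq0 ?expf_neq0 // -size_poly_eq0 sq.
  have B2n0 : B ^+ 2 != 0 by rewrite expf_neq0.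
  have qn0 : q != 0 by rewrite -size_poly_eq0 sq.
  have e := size_mul qn0 B2n0; rewrite e sq in sB.
  have sB2 : (size (B ^+ 2) <= 0.*2.+1)%N.
    by move: sB; case: (size (B ^+ 2)).
  move=> h2; have := leq_trans h2 (size_sq_le sB2); by [].
- apply: irr_coprime => //; apply/negP => pq.
  move: qf; have : p %= q by rewrite -dvdp_size_eqp // sp sq.
  by rewrite /eqp pq /= => qp; rewrite (dvdp_trans qp dv).
Qed.


Lemma size_mul3 (R : realType) (p g f : {poly R}) : size p = 3%N -> f = p * g ->
  f != 0 -> size f = (size g).+2.
Proof.
move=> sp fE fn0; have pn0 : p != 0 by rewrite -size_poly_eq0 sp.
have gn0 : g != 0 by apply: contraNneq fn0 => g0; rewrite fE g0 mulr0.
by rewrite fE size_mul // sp.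
Qed.

Lemma repA (R : realType) (q : {poly R}) : pd_poly q -> size q = 3%N ->
  forall n (f : {poly R}), (size f <= n)%N -> psd_poly f -> exists u, f = nrm q u.
Proof.
move=> hq sq; elim=> [|n IH] f sf hf.
  move: sf; rewrite leqn0 size_poly_eq0 => /eqP ->.
  by exists (0, 0); rewrite /nrm /= !expr2 !mul0r mulr0 addr0.
have [s1|s1] := leqP (size f) 1.
  have fE := size1_polyC s1.
  have c0 : 0 <= f`_0 by have := hf 0; rewrite {1}fE hornerC.
  exists (0, (Num.sqrt f`_0)%:P); rewrite /nrm /= (expr2 0) mul0r mulr0 addr0.
  by rewrite -polyC_exp sqr_sqrtr.
have fn0 : f != 0 by rewrite -size_poly_eq0; case: (size f) s1.
have [[r [g [fE hg]]]|[[g [fE hg]]|[_ [p [A [B [g [fE hg pE hp [sp _ _ _ _]]]]]]]]] :=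
  classify hq sq hf s1.
- have sg := size_mul3 (size_exp_XsubC 2 r) fE fn0.
  have [v vE] := IH g ltac:(by move: sf; rewrite sg ltnS => /ltnW) hg.
  exists (('X - r%:P) * v.1, ('X - r%:P) * v.2).
  by rewrite fE vE /nrm /=; ring.
- have sg := size_mul3 sq fE fn0.
  have [v vE] := IH g ltac:(by move: sf; rewrite sg ltnS => /ltnW) hg.
  exists (v.2, q * v.1).
  by rewrite fE vE /nrm /=; ring.
- have sg := size_mul3 sp fE fn0.
  have [v vE] := IH g ltac:(by move: sf; rewrite sg ltnS => /ltnW) hg.
  exists (pmul q A B v).
  by rewrite nrm_pmul -vE -pE fE mulrC.
Qed.


Lemma pmul_inj (R : realType) (q A B : {poly R}) : 0 < lead_coef q ->
  A ^+ 2 + q * B ^+ 2 != 0 -> injective (pmul q A B).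
Proof.
move=> lq pn0 [u1 u2] [v1 v2] [e1 e2].
have h : nrm q (u1 - v1, u2 - v2) * (A ^+ 2 + q * B ^+ 2) = 0.
  have -> : nrm q (u1 - v1, u2 - v2) * (A ^+ 2 + q * B ^+ 2) =
    ((u2 * A - q * u1 * B) - (v2 * A - q * v1 * B)) ^+ 2 +
    q * ((u1 * A + u2 * B) - (v1 * A + v2 * B)) ^+ 2 by rewrite /nrm /=; ring.
  by rewrite e1 e2 !subrr expr2 !mul0r mulr0 addr0.
move/eqP: h; rewrite mulf_eq0 (negPf pn0) orbF => /eqP /(nrm_eq0 lq) /= [h1 h2].
by move/eqP: h1; move/eqP: h2; rewrite !subr_eq0 => /eqP -> /eqP ->.
Qed.

Lemma dec (R : realType) (q p A B f g : {poly R}) (x : {poly R} * {poly R}) :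
  irreducible_poly p -> coprimep p q -> p = A ^+ 2 + q * B ^+ 2 ->
  f = p * g -> f = nrm q x -> p %| x.2 * A + q * x.1 * B ->
  exists w, g = nrm q w /\ x = pmul q A B w.
Proof.
case: x => x1 x2 /= ip cpq pE fE fx /dvdpP [e2 E2].
have pn0 : p != 0 := irredp_neq0 ip.
have I1 : (x2 * A + q * x1 * B) ^+ 2 + q * (x1 * A - x2 * B) ^+ 2 = f * p.
  by rewrite fx pE /nrm /=; ring.
have py : p %| (x1 * A - x2 * B).
  apply: (irr_sq ip); rewrite -(Gauss_dvdpr _ cpq).
  have -> : q * (x1 * A - x2 * B) ^+ 2 = (p * (g - e2 ^+ 2)) * p.
    have -> : q * (x1 * A - x2 * B) ^+ 2 = f * p - (x2 * A + q * x1 * B) ^+ 2.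
      by rewrite -I1; ring.
    by rewrite E2 fE; ring.
  by rewrite dvdp_mull.
case/dvdpP: py => e1 E1.
exists (e1, e2); split.
  apply: (mulfI (expf_neq0 2 pn0)).
  have : (e2 * p) ^+ 2 + q * (e1 * p) ^+ 2 = p * g * p by rewrite -E1 -E2 I1 fE.
  by rewrite /nrm /= => e; rewrite -[p ^+ 2 * g]/(p * p * g) mulrAC -e; ring.
congr (_, _); apply: (mulfI pn0).
  have -> : p * (e1 * A + e2 * B) = (e1 * p) * A + (e2 * p) * B by ring.
  by rewrite -E1 -E2 pE; ring.
have -> : p * (e2 * A - q * e1 * B) = (e2 * p) * A - q * (e1 * p) * B by ring.
by rewrite -E1 -E2 pE; ring.
Qed.

Lemma split_dvd (R : realType) (q p A B f g : {poly R}) (x : {poly R} * {poly R}) :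
  irreducible_poly p -> p = A ^+ 2 + q * B ^+ 2 ->
  f = p * g -> f = nrm q x ->
  (p %| x.2 * A + q * x.1 * B) || (p %| x.2 * A + q * x.1 * (- B)).
Proof.
move=> ip pE fE fx; apply: (irr_prime ip).
have -> : (x.2 * A + q * x.1 * B) * (x.2 * A + q * x.1 * - B) =
  p * x.2 ^+ 2 - q * B ^+ 2 * f by rewrite fx pE /nrm; ring.
rewrite fE.
have -> : p * x.2 ^+ 2 - q * B ^+ 2 * (p * g) = p * (x.2 ^+ 2 - q * B ^+ 2 * g) by ring.
exact: dvdp_mulIl.
Qed.

Lemma overlap (R : realType) (q p A B f g : {poly R}) (x w1 w2 : {poly R} * {poly R}) :
  irreducible_poly p -> coprimep p A -> coprimep p B -> coprimep p q ->
  p = A ^+ 2 + q * B ^+ 2 -> f = p * g -> f = nrm q x ->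
  x = pmul q A B w1 -> x = pmul q A (- B) w2 -> p %| g.
Proof.
case: x => x1 x2 ip cA cB cq pE fE fx.
case: w1 => u1 u2; case: w2 => v1 v2; rewrite /pmul /= => -[e1 e2] [e3 e4].
have h1 : x2 * A + q * x1 * B = u2 * p by rewrite pE e1 e2; ring.
have h2 : x2 * A - q * x1 * B = v2 * p by rewrite pE e3 e4; ring.
have two : (2%:R : R) != 0 by rewrite pnatr_eq0.
have d2 : p %| x2.
  rewrite -(Gauss_dvdpl _ cA) -(dvdpZr _ _ two).
  have -> : 2%:R *: (x2 * A) = (x2 * A + q * x1 * B) + (x2 * A - q * x1 * B).
    by rewrite scaler_nat mulr2n; ring.
  by rewrite h1 h2 -mulrDl dvdp_mull.
have d1 : p %| x1.
  rewrite -(Gauss_dvdpr _ cq) -(Gauss_dvdpl _ cB) -(dvdpZr _ _ two).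
  have -> : 2%:R *: (q * x1 * B) = (x2 * A + q * x1 * B) - (x2 * A - q * x1 * B).
    by rewrite scaler_nat mulr2n; ring.
  by rewrite h1 h2 -mulrBl dvdp_mull.
case/dvdpP: d1 => k1 E1; case/dvdpP: d2 => k2 E2.
have pn0 : p != 0 := irredp_neq0 ip.
have : p * g = p * (p * nrm q (k1, k2)) by rewrite -fE fx E1 E2 /nrm /=; ring.
by move/(mulfI pn0) => ->; rewrite dvdp_mulIl.
Qed.

Lemma sqfree_mul (R : realType) (p g : {poly R}) : irreducible_poly p ->
  squarefree_poly (p * g) <-> (squarefree_poly g /\ ~~ (p %| g)).
Proof.
move=> ip; have pn0 := irredp_neq0 ip; split.
  move=> h; split.
    by move=> k sk kg; apply: (h k sk); rewrite dvdp_mull.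
  apply/negP => /dvdpP [k E]; apply: (h p ip.1).
  by rewrite E mulrCA expr2 dvdp_mull // dvdpp.
case=> hg npg k sk kpg.
case: (boolP (p %| k)) => pk.
  apply/negP: npg; rewrite negbK.
  case/dvdpP: pk => m E; move: kpg; rewrite E.
  have -> : (m * p) ^+ 2 = p * (m ^+ 2 * p) by ring.
  by rewrite dvdp_mul2l // => /(dvdp_trans (dvdp_mull _ (dvdpp p))).
apply: (hg k sk); have c : coprimep (k ^+ 2) p.
  by rewrite coprimep_sym; apply: coprimep_expr; exact: irr_coprime.
by rewrite -(Gauss_dvdpr _ c).
Qed.


Lemma ev0 (R : realType) (q : {poly R}) (u : {poly R} * {poly R}) (r : R) :
  pd_poly q -> (nrm q u).[r] = 0 -> u.1.[r] = 0 /\ u.2.[r] = 0.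
Proof.
move=> hq; rewrite /nrm hornerD horner_exp hornerM horner_exp => h.
have Q := hq r.
have h1 := sqr_ge0 u.2.[r].
have h2 : 0 <= q.[r] * u.1.[r] ^+ 2 by rewrite mulr_ge0 ?sqr_ge0 // ltW.
have a0 : u.2.[r] ^+ 2 = 0 by lra.
have b0 : q.[r] * u.1.[r] ^+ 2 = 0 by lra.
move/eqP: a0; move/eqP: b0; rewrite mulf_eq0 (gt_eqF Q) /= !sqrf_eq0.
by move=> /eqP -> /eqP ->.
Qed.

Lemma not_sqfree_root (R : realType) (f g : {poly R}) (r : R) :
  f = ('X - r%:P) ^+ 2 * g -> ~ squarefree_poly f.
Proof.
move=> fE h; apply: (h ('X - r%:P)); first by rewrite size_XsubC.
by rewrite fE dvdp_mulIl.
Qed.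

Lemma pow_facts (d : nat) : (0 < expn 2 d.+1)%N /\ expn 2 d.+2 = (expn 2 d.+1 + expn 2 d.+1)%N.
Proof. by rewrite expn_gt0 /= expnS mul2n addnn. Qed.

Lemma nat1 (a E : nat) : (a <= E)%N -> (a <= E + E)%N.
Proof. lia. Qed.

Lemma nat2 (a E : nat) : (0 < E)%N -> (a <= E)%N -> a = (E + E)%N -> False.
Proof. lia. Qed.

Definition RepList (R : realType) (q f : {poly R}) (d : nat)
   (s : seq ({poly R} * {poly R})) : Prop :=
  [/\ uniq s, (forall u, u \in s <-> f = nrm q u), (size s <= expn 2 d.+1)%N &
      (size s = expn 2 d.+1 <-> (~ (q %| f) /\ squarefree_poly f))].

Lemma repB0 (R : realType) (q f : {poly R}) : pd_poly q -> size q = 3%N ->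
  psd_poly f -> f != 0 -> size f = 1%N -> exists s, RepList q f 0 s.
Proof.
move=> hq sq hf fn0 sf.
have lq := lcq_pos hq sq.
have s1 : (size f <= 1)%N by rewrite sf.
have fE := size1_polyC s1.
have c0 : 0 <= f`_0 by have := hf 0; rewrite {1}fE hornerC.
have cn0 : f`_0 != 0 by apply: contraNneq fn0 => e; rewrite fE e.
have cp : 0 < f`_0 by rewrite lt_def cn0.
set c := f`_0 in fE c0 cn0 cp.
set sc := Num.sqrt c.
have sc0 : 0 < sc by rewrite sqrtr_gt0.
have sc2 : (sc%:P) ^+ 2 = f by rewrite fE -polyC_exp sqr_sqrtr // ltW.
exists [:: (0, sc%:P); (0, - sc%:P)]; split.
- rewrite /= inE andbT xpair_eqE eqxx /= -polyCN (inj_eq polyC_inj).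
  apply/negP => /eqP e; have h : 0 < - sc by rewrite -e.
  by rewrite oppr_gt0 ltNge (ltW sc0) in h.
- move=> [u1 u2]; split.
    rewrite !inE !xpair_eqE => /orP [] /andP [/eqP -> /eqP ->];
    by rewrite /nrm /= ?sqrrN sc2 expr2 !mul0r mulr0 addr0.
  move=> fu.
  have qu : q * u1 ^+ 2 = 0.
    apply/eqP; apply: contraT => hn.
    have := dvdp_leq hn (dvdp_mulIl q (u1 ^+ 2)).
    have [_ h] := nrm_size (u1, u2) lq; rewrite /= -fu sf in h.
    by rewrite sq => h'; have := leq_trans h' h.
  have u10 : u1 = 0.
    by move/eqP: qu; rewrite mulf_eq0 -size_poly_eq0 sq /= sqrf_eq0 => /eqP.
  move: fu; rewrite /nrm /= qu addr0 -sc2 => /eqP.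
  rewrite -subr_eq0 subr_sqr mulf_eq0 subr_eq0 addr_eq0 => /orP [] /eqP e;
  by rewrite u10 e !inE ?opprK eqxx ?orbT.
- by [].
- split => // _; split.
    move=> qf; have := dvdp_leq fn0 qf; by rewrite sq sf.
  move=> k sk kf; have kk : k %| k ^+ 2 by rewrite expr2 dvdp_mulIl.
  have := dvdp_leq fn0 (dvdp_trans kk kf); rewrite sf => h.
  by have := leq_trans sk h.
Qed.

Lemma case1 (R : realType) (q f g : {poly R}) (r : R) d sg :
  pd_poly q -> f = ('X - r%:P) ^+ 2 * g -> RepList q g d sg ->
  exists s, RepList q f d.+1 s.
Proof.
move=> hq fE [ug mg szg eqg].
set c := 'X - r%:P.
have cn0 : c != 0 by rewrite polyXsubC_eq0.
exists (map (fun v => (c * v.1, c * v.2)) sg).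
have [E0 E1] := pow_facts d.
split.
- rewrite map_inj_uniq // => [[a1 a2] [b1 b2]] /= [e1 e2].
  by rewrite (mulfI cn0 e1) (mulfI cn0 e2).
- move=> [u1 u2]; split.
    case/mapP => -[v1 v2] vin [-> ->].
    by have := (mg (v1, v2)).1 vin; rewrite fE /nrm /= => ->; rewrite /c; ring.
  move=> fu.
  have rf : (nrm q (u1, u2)).[r] = 0.
    by rewrite -fu fE hornerM horner_exp hornerXsubC subrr expr2 !mul0r.
  have [h1 h2] := ev0 hq rf; move: h1 h2 => /= h1 h2.
  have /factor_theorem [w1 W1] : root u1 r by rewrite /root h1.
  have /factor_theorem [w2 W2] : root u2 r by rewrite /root h2.
  apply/mapP; exists (w1, w2); last by rewrite /= W1 W2 !(mulrC c).
  apply/mg; apply: (mulfI (expf_neq0 2 cn0)); rewrite -fE fu W1 W2 /nrm /=.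
  by rewrite /c; ring.
  by rewrite size_map E1; apply: nat1.
- rewrite size_map E1; split.
    by move=> h; exfalso; apply: (nat2 E0 szg h).
  by case=> _ /(not_sqfree_root fE).
Qed.

Lemma case2 (R : realType) (q f g : {poly R}) d sg :
  pd_poly q -> size q = 3%N -> f = q * g -> RepList q g d sg ->
  exists s, RepList q f d.+1 s.
Proof.
move=> hq sq fE [ug mg szg eqg].
have qn0 : q != 0 by rewrite -size_poly_eq0 sq.
have iq := pd_irr hq sq.
exists (map (fun v => (v.2, q * v.1)) sg).
have [E0 E1] := pow_facts d.
split.
- rewrite map_inj_uniq // => [[a1 a2] [b1 b2]] /= [e1 e2].
  by rewrite e1 (mulfI qn0 e2).
- move=> [u1 u2]; split.
    case/mapP => -[v1 v2] vin [-> ->].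
    by have := (mg (v1, v2)).1 vin; rewrite fE /nrm /= => ->; ring.
  move=> fu.
  have : q %| u2 ^+ 2.
    have -> : u2 ^+ 2 = q * (g - u1 ^+ 2) by rewrite mulrBr -fE fu /nrm /=; ring.
    exact: dvdp_mulIl.
  move=> /(irr_sq iq) /dvdpP [w W].
  apply/mapP; exists (w, u1); last by rewrite /= W mulrC.
  apply/mg; apply: (mulfI qn0); rewrite -fE fu W /nrm /=; ring.
- by rewrite size_map E1; apply: nat1.
- rewrite size_map E1; split.
    by move=> h; exfalso; apply: (nat2 E0 szg h).
  by case=> nq _; exfalso; apply: nq; rewrite fE dvdp_mulIl.
Qed.

Lemma nat3 (a E : nat) : (a <= E)%N -> (a + a <= E + E)%N.
Proof. lia. Qed.

Lemma nat4 (a b E : nat) : (b <= a + a)%N -> (a <= E)%N -> b = (E + E)%N ->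
  a = E /\ b = (a + a)%N.
Proof. lia. Qed.

Lemma case3 (R : realType) (q f p A B g : {poly R}) d sg :
  pd_poly q -> size q = 3%N -> ~~ (q %| f) -> f = p * g -> psd_poly g ->
  p = A ^+ 2 + q * B ^+ 2 -> pd_poly p -> irreducible_poly p ->
  coprimep p A -> coprimep p B -> coprimep p q -> RepList q g d sg ->
  exists s, RepList q f d.+1 s.
Proof.
move=> hq sq nqf fE hg pE hp ip cA cB cq [ug mg szg eqg].
have lq := lcq_pos hq sq.
have pn0 := irredp_neq0 ip.
have pE' : p = A ^+ 2 + q * (- B) ^+ 2 by rewrite sqrrN.
have inj1 : injective (pmul q A B) by apply: pmul_inj => //; rewrite -pE.
have inj2 : injective (pmul q A (- B)) by apply: pmul_inj => //; rewrite -pE'.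
set l1 := map (pmul q A B) sg; set l2 := map (pmul q A (- B)) sg.
have mem1 : forall x, x \in l1 -> f = nrm q x.
  move=> x /mapP [v vin ->]; rewrite nrm_pmul -pE -(mg v).1 // fE mulrC //.
have mem2 : forall x, x \in l2 -> f = nrm q x.
  move=> x /mapP [v vin ->]; rewrite nrm_pmul -pE' -(mg v).1 // fE mulrC //.
have key : uniq (l1 ++ l2) <-> ~~ (p %| g).
  split.
    move=> hu; apply/negP => /dvdpP [h hE].
    have hh : psd_poly h by apply: (psd_div hp); rewrite mulrC -hE.
    have [v hv] := repA hq sq (leqnn (size h)) hh.
    set x := (p * v.1, p * v.2).
    have fx : f = nrm q x by rewrite fE hE hv /nrm /=; ring.
    have d1 : p %| x.2 * A + q * x.1 * B.
      have -> : x.2 * A + q * x.1 * B = p * (v.2 * A + q * v.1 * B) by rewrite /=; ring.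
      exact: dvdp_mulIl.
    have d2 : p %| x.2 * A + q * x.1 * (- B).
      have -> : x.2 * A + q * x.1 * (- B) = p * (v.2 * A + q * v.1 * (- B)) by rewrite /=; ring.
      exact: dvdp_mulIl.
    have [w1 [g1 x1]] := dec ip cq pE fE fx d1.
    have [w2 [g2 x2]] := dec ip cq pE' fE fx d2.
    move: hu; rewrite cat_uniq => /and3P [_ hn _]; apply: (negP hn).
    apply/hasP; exists x.
      by apply/mapP; exists w2 => //; apply/mg.
    by apply/mapP; exists w1 => //; apply/mg.
  move=> npg; rewrite cat_uniq !map_inj_uniq // ug /= andbT.
  apply/hasP => -[x xl2 xl1].
  have fx := mem1 x xl1.
  case/mapP: xl1 => w1 _ e1; case/mapP: xl2 => w2 _ e2.
  by move: npg; rewrite (overlap ip cA cB cq pE fE fx e1 e2).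
have [E0 E1] := pow_facts d.
exists (undup (l1 ++ l2)); split.
- exact: undup_uniq.
- move=> x; rewrite mem_undup mem_cat; split.
    by case/orP; [exact: mem1 | exact: mem2].
  move=> fx; have := split_dvd ip pE fE fx; case/orP => h.
    have [w [gw xw]] := dec ip cq pE fE fx h.
    by apply/orP; left; apply/mapP; exists w => //; apply/mg.
  have [w [gw xw]] := dec ip cq pE' fE fx h.
  by apply/orP; right; apply/mapP; exists w => //; apply/mg.
- apply: leq_trans (size_undup _) _.
  by rewrite size_cat !size_map E1; apply: nat3.
have sL : size (l1 ++ l2) = (size sg + size sg)%N by rewrite size_cat !size_map.
have nqg : ~ (q %| g) by move=> qg; move: nqf; rewrite fE (dvdp_mull _ qg).
have sqf := sqfree_mul g ip; rewrite -fE in sqf.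
rewrite E1; split.
  move=> h.
  have [e1 e2] := nat4 (leq_trans (size_undup _) (eq_leq sL)) szg h.
  have hu : uniq (l1 ++ l2).
    by rewrite (uniq_size_uniq (undup_uniq _) (mem_undup _)) sL e2.
  split; first by apply/negP.
  apply/sqf; split; [by case: (eqg.1 e1) | exact: key.1].
case=> _ /sqf [sg' npg].
have hu := key.2 npg.
rewrite (undup_id hu) sL.
by have [->] : size sg = expn 2 d.+1 by apply/eqg.
Qed.

Lemma nat5 (a d : nat) : a.+2 = (2 * d.+1).+1 -> a = (2 * d).+1.
Proof. lia. Qed.

Lemma repB (R : realType) (q : {poly R}) : pd_poly q -> size q = 3%N ->
  forall d (f : {poly R}), psd_poly f -> f != 0 -> size f = (2 * d).+1 ->
  exists s, RepList q f d s.
Proof.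
move=> hq sq; elim=> [|d IH] f hf fn0 sf.
  by apply: repB0 => //; rewrite sf muln0.
have s1 : (1 < size f)%N by rewrite sf.
have gsz : forall p g : {poly R}, size p = 3%N -> f = p * g -> g != 0 /\ size g = (2 * d).+1.
  move=> p g sp fE; split.
    by apply: contraNneq fn0 => g0; rewrite fE g0 mulr0.
  by apply: nat5; rewrite -(size_mul3 sp fE fn0).
have [[r [g [fE hg]]]|[[g [fE hg]]|[nqf [p [A [B [g [fE hg pE hp [sp ip cA cB cq]]]]]]]]] :=
  classify hq sq hf s1.
- have [gn0 sg] := gsz _ _ (size_exp_XsubC 2 r) fE.
  have [sl Hs] := IH g hg gn0 sg.
  exact: case1 hq fE Hs.
- have [gn0 sg] := gsz _ _ sq fE.
  have [sl Hs] := IH g hg gn0 sg.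
  exact: case2 hq sq fE Hs.
- have [gn0 sg] := gsz _ _ sp fE.
  have [sl Hs] := IH g hg gn0 sg.
  exact: case3 hq sq nqf fE hg pE hp ip cA cB cq Hs.
Qed.

Theorem proposition1p1 (R : realType) (q : {poly R}) :
  pd_poly q -> size q = 3%N ->
  (forall f : {poly R}, psd_poly f ->
     exists xi eta : {poly R}, f = eta ^+ 2 + q * xi ^+ 2)
  /\
  (forall (f : {poly R}) (d : nat), psd_poly f -> f != 0 ->
     size f = (2 * d).+1 ->
     exists s : seq ({poly R} * {poly R}),
       uniq s /\
       (forall xi eta : {poly R},
          (xi, eta) \in s <-> f = eta ^+ 2 + q * xi ^+ 2) /\
       (size s <= expn 2 d.+1)%N /\
       (size s = expn 2 d.+1 <-> (~ (q %| f) /\ squarefree_poly f))).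
Proof.
move=> hq sq; split.
  move=> f hf; have [[xi eta] e] := repA hq sq (leqnn (size f)) hf.
  by exists xi, eta.
move=> f d hf fn0 sf; have [s [us ms ss es]] := repB hq sq hf fn0 sf.
exists s; split => //; split => //.
Qed.
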